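(* In the one-way trading setting, for every $\pi\ge1$, $$\Phi_\Delta(\pi)=\frac{\Delta}{\pi}\,(1+\ln\theta),\qquad \theta=M/m.$$
   Context: One-way trading: fix $\Delta>0$, $0<m\le M$, $\theta=M/m$. The revenue function at time $t$ is $g_t(v)=p(t)\,v$ on $[0,\Delta]$ with price $p(t)\in[m,M]$; an input is a finite price sequence $\sigma=(p(1),\dots,p(T))$, $T\ge1$. The offline optimum on $\sigma^{[1:t]}=(p(1),\dots,p(t))$ is $\eta_{OPT}(\sigma^{[1:t]})=\Delta\max_{s\le t}p(s)$. For $\pi\ge1$, CR-Pursuit($\pi$) sells at time $t$ the quantity $\bar v_t=\frac{\Delta}{\pi p(t)}\big(\max_{s\le t}p(s)-\max_{s\le t-1}p(s)\big)$, with the maximum over an empty set equal to $0$. $\Phi_\Delta(\pi)$ is the supremum over all finite inputs of $\sum_t\bar v_t$. *)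

(* Defs.v *)
From Stdlib Require Import Reals Lra List.
Open Scope R_scope.

(* Maximum of a list of reals, with the maximum over the empty list equal to 0
   (the convention of the paper). *)
Definition maxR (l : list R) : R := fold_left Rmax l 0.

(* Running maximum max_{s <= t} p(s) of the input sigma (time indices 1..T,
   list position t-1); prefix_max sigma 0 = 0. *)
Definition prefix_max (sigma : list R) (t : nat) : R := maxR (firstn t sigma).

Definition eta_OPT (Delta : R) (sigma : list R) (t : nat) : R :=
  Delta * prefix_max sigma t.

(* Quantity sold by CR-Pursuit(pi) at time t (1 <= t <= T), p(t) = nth (t-1). *)
Definition cr_pursuit_amount (Delta pi : R) (sigma : list R) (t : nat) : R :=
  Delta / (pi * nth (t - 1) sigma 0) *
  (prefix_max sigma t - prefix_max sigma (t - 1)).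

Definition cr_pursuit_total (Delta pi : R) (sigma : list R) : R :=
  fold_right Rplus 0
    (map (cr_pursuit_amount Delta pi sigma) (seq 1 (length sigma))).

Definition valid_input (m M : R) (sigma : list R) : Prop :=
  (1 <= length sigma)%nat /\ Forall (fun p => m <= p <= M) sigma.

Definition is_Phi (Delta m M pi : R) (phi : R) : Prop :=
  is_lub (fun x => exists sigma, valid_input m M sigma /\
                                 x = cr_pursuit_total Delta pi sigma) phi.

(* Main.v *)
Require Import Defs.
From Stdlib Require Import Reals List Lra Lia.
Open Scope R_scope.

Lemma lnle (x y : R) : 0 < x -> x <= y -> ln x <= ln y.
Proof. intros Hx [H|H]. left; apply ln_increasing; auto. subst; lra. Qed.

Lemma exple (x y : R) : x <= y -> exp x <= exp y.
Proof. intros [H|H]. left; apply exp_increasing; auto. subst; lra. Qed.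

Lemma maxR_snoc l x : maxR (l ++ x :: nil) = Rmax (maxR l) x.
Proof. unfold maxR. rewrite fold_left_app. reflexivity. Qed.

Lemma fr_shift (L : list R) c : fold_right Rplus c L = fold_right Rplus 0 L + c.
Proof. induction L; simpl; [lra | rewrite IHL; lra]. Qed.

Lemma total_nil D p : cr_pursuit_total D p nil = 0.
Proof. reflexivity. Qed.

Lemma total_snoc D p l x :
  cr_pursuit_total D p (l ++ x :: nil) =
  cr_pursuit_total D p l + D / (p * x) * (Rmax (maxR l) x - maxR l).
Proof.
  unfold cr_pursuit_total.
  rewrite length_app. simpl length. rewrite Nat.add_1_r, seq_S, map_app, fold_right_app.
  rewrite fr_shift. f_equal.
  - f_equal. apply map_ext_in. intros t Ht. apply in_seq in Ht.
    unfold cr_pursuit_amount, prefix_max.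
    rewrite !firstn_app. replace (t - length l)%nat with 0%nat by lia.
    replace (t - 1 - length l)%nat with 0%nat by lia. simpl.
    rewrite !app_nil_r. rewrite app_nth1 by lia. reflexivity.
  - simpl. unfold cr_pursuit_amount, prefix_max.
    replace (S (length l) - 1)%nat with (length l) by lia.
    rewrite nth_middle. rewrite firstn_all2 by (rewrite length_app; simpl; lia).
    rewrite firstn_app, Nat.sub_diag, firstn_all. simpl. rewrite app_nil_r, maxR_snoc. lra.
Qed.

Lemma upper D p m M (l : list R) : 0 < D -> 0 < m -> 1 <= p -> l <> nil ->
  Forall (fun q => m <= q <= M) l ->
  m <= maxR l <= M /\ cr_pursuit_total D p l <= D / p * (1 + ln (maxR l / m)).
Proof.
  intros HD Hm Hp. induction l as [|x l IH] using rev_ind; [congruence|].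
  intros _ HF. apply Forall_app in HF as [HF1 HF2]. inversion HF2; subst.
  rewrite total_snoc, maxR_snoc.
  assert (HDp : 0 < D / p) by (apply Rdiv_lt_0_compat; lra).
  destruct l as [|y l'].
  - rewrite total_nil. change (maxR nil) with 0.
    rewrite Rmax_right by lra. split; [lra|].
    assert (ln 1 <= ln (x / m)) by (apply lnle; [lra|]; apply Rdiv_le_1_compat_rev || idtac;
      apply (Rmult_le_reg_r m); [lra|]; field_simplify; lra).
    rewrite ln_1 in H. replace (D / (p * x) * (x - 0)) with (D / p) by (field; lra).
    nra.
  - destruct (IH ltac:(congruence) HF1) as [[Ha1 Ha2] Ht].
    set (a := maxR (y :: l')) in *.
    destruct (Rle_dec x a) as [Hxa|Hxa].
    + rewrite Rmax_left by lra. split; [lra|]. lra.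
    + rewrite Rmax_right by lra. split; [lra|].
      assert (Hx : 0 < x) by lra.
      assert (Hsplit : ln (x / m) = ln (x / a) + ln (a / m)).
      { rewrite <- ln_mult by (apply Rdiv_lt_0_compat; lra). f_equal. field; lra. }
      assert (Hk : 1 - a / x <= ln (x / a)).
      { pose proof (exp_ineq1_le (ln (a / x))) as E.
        rewrite exp_ln in E by (apply Rdiv_lt_0_compat; lra).
        assert (ln (a / x) + ln (x / a) = 0).
        { rewrite <- ln_mult by (apply Rdiv_lt_0_compat; lra).
          replace (a / x * (x / a)) with 1 by (field; lra). apply ln_1. }
        lra. }
      replace (D / (p * x) * (x - a)) with (D / p * (1 - a / x)) by (field; lra).
      rewrite Hsplit. nra.
Qed.

Definition gf m c (k : nat) := m * exp (INR k * c).
Definition gseq m c k := map (gf m c) (seq 0 (S k)).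

Lemma gseq_S m c k : gseq m c (S k) = gseq m c k ++ gf m c (S k) :: nil.
Proof. unfold gseq. rewrite (seq_S (S k)), map_app. reflexivity. Qed.

Lemma gseq_prop D p m c k : 0 < m -> 1 <= p -> 0 <= c ->
  maxR (gseq m c k) = gf m c k /\
  cr_pursuit_total D p (gseq m c k) = D / p * (1 + INR k * (1 - exp (- c))).
Proof.
  intros Hm Hp Hc. induction k as [|k IH].
  - change (gseq m c 0) with (nil ++ gf m c 0 :: nil).
    rewrite maxR_snoc, total_snoc, total_nil. unfold maxR; simpl.
    unfold gf. simpl. rewrite Rmult_0_l, exp_0, Rmult_1_r.
    rewrite Rmax_right by lra. split; [reflexivity|]. field; lra.
  - destruct IH as [H1 H2]. rewrite gseq_S, maxR_snoc, total_snoc, H1, H2.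
    assert (E : gf m c (S k) = gf m c k * exp c).
    { unfold gf. rewrite S_INR, Rmult_plus_distr_r, Rmult_1_l, exp_plus. ring. }
    assert (Hg : 0 < gf m c k) by (unfold gf; pose proof (exp_pos (INR k * c)); nra).
    assert (Hec : 1 <= exp c) by (pose proof (exp_ineq1_le c); lra).
    rewrite Rmax_right by (rewrite E; nra). split; [reflexivity|].
    rewrite E, exp_Ropp, S_INR. pose proof (exp_pos c). field.
    split; lra.
Qed.

Theorem mainTheorem12 (Delta m M pi : R) :
  0 < Delta -> 0 < m -> m <= M -> 1 <= pi ->
  is_Phi Delta m M pi (Delta / pi * (1 + ln (M / m))).
Proof.
  intros HD Hm HM Hp.
  assert (HDp : 0 < Delta / pi) by (apply Rdiv_lt_0_compat; lra).
  assert (HL : 0 <= ln (M / m)).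
  { rewrite <- ln_1. apply lnle; [lra|]. apply (Rmult_le_reg_r m); [lra|].
    field_simplify; lra. }
  set (L := ln (M / m)) in *.
  split.
  - intros x [s [[Hlen HF] ->]].
    assert (Hne : s <> nil) by (intro; subst; simpl in Hlen; lia).
    destruct (upper Delta pi m M s HD Hm Hp Hne HF) as [[H1 H2] H3].
    assert (ln (maxR s / m) <= L).
    { apply lnle. apply Rdiv_lt_0_compat; lra. unfold Rdiv.
      apply Rmult_le_compat_r; [left; apply Rinv_0_lt_compat; lra| lra]. }
    nra.
  - intros b Hb.
    assert (Hn : forall n : nat, (1 <= n)%nat ->
              Delta / pi * (1 + L - L * L / INR n) <= b).
    { intros n Hn1. assert (HnR : 1 <= INR n) by (apply (le_INR 1); lia).
      set (c := L / INR n).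
      assert (Hc : 0 <= c) by (unfold c; unfold Rdiv; apply Rmult_le_pos; [lra|left; apply Rinv_0_lt_compat; lra]).
      destruct (gseq_prop Delta pi m c n Hm Hp Hc) as [_ Ht].
      assert (Hin : Delta / pi * (1 + INR n * (1 - exp (- c))) <= b).
      { apply Hb. exists (gseq m c n). split; [|symmetry; exact Ht].
        split. unfold gseq. rewrite length_map, length_seq. lia.
        apply Forall_forall. intros q Hq. unfold gseq in Hq.
        apply in_map_iff in Hq as [k [<- Hk]]. apply in_seq in Hk.
        unfold gf. assert (Hk' : INR k <= INR n) by (apply le_INR; lia).
        pose proof (pos_INR k).
        split.
        - assert (1 <= exp (INR k * c)) by (pose proof (exp_ineq1_le (INR k * c)); nra). nra.
        - assert (exp (INR k * c) <= exp L).
          { apply exple. replace L with (INR n * c) by (unfold c; field; lra). nra. }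
          unfold L in H0. rewrite exp_ln in H0 by (apply Rdiv_lt_0_compat; lra).
          apply (Rmult_le_compat_l m) in H0; [|lra].
          replace (m * (M / m)) with M in H0 by (field; lra). lra. }
      assert (Hkey : c - c * c <= 1 - exp (- c)).
      { pose proof (exp_ineq1_le (- c)). pose proof (exp_ineq1_le c).
        rewrite exp_Ropp in *. pose proof (exp_pos c).
        set (e := exp c) in *.
        assert (0 <= (e - 1 - c) * / e) by (apply Rmult_le_pos; [lra|left; apply Rinv_0_lt_compat; lra]).
        replace ((e - 1 - c) * / e) with (1 - / e - c * / e) in H2 by (field; lra).
        assert (0 < / e) by (apply Rinv_0_lt_compat; lra).
        nra. }
      assert (INR n * (c - c * c) = L - L * L / INR n) by (unfold c; field; lra).
      assert (INR n * (c - c*c) <= INR n * (1 - exp (- c))) by (apply Rmult_le_compat_l; lra).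
      nra. }
    destruct (Rle_dec (Delta / pi * (1 + L)) b) as [H|H]; [exact H|].
    exfalso. apply Rnot_le_lt in H.
    set (g := Delta / pi * (1 + L) - b).
    assert (Hg : 0 < g) by (unfold g; lra).
    destruct (INR_archimed g (Delta / pi * (L * L) + 1) ltac:(lra)) as [n Hnn].
    destruct n as [|n].
    + simpl in Hnn. nra.
    + pose proof (Hn (S n) ltac:(lia)). pose proof (pos_INR (S n)).
      assert (HS : 0 < INR (S n)) by (apply lt_0_INR; lia).
      assert (Delta / pi * (L * L / INR (S n)) < g).
      { apply (Rmult_lt_reg_r (INR (S n))); [lra|].
        replace (Delta / pi * (L * L / INR (S n)) * INR (S n)) with (Delta / pi * (L*L)) by (field; lra).
        lra. }
      unfold g in *. nra.
Qed.
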